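(* Let $\langle W,\varphi,(Y,\mathbb S,\sigma)\rangle$ be a monotone one-dimensional cocycle with skew-product system $(X,\mathbb S_+,\pi)$, $h=\mathrm{pr}_2$, and $\tau\in\mathbb S_+$, $\tau>0$. Assume: (1) $u_1<u_2$ implies $\varphi(k\tau,u_1,y)<\varphi(k\tau,u_2,y)$ for all $k\in\mathbb N$, $y\in Y$; (2) $x_0\in X$ has precompact semi-trajectory; (3) $y_0:=h(x_0)$ is asymptotically $\tau$-periodic, with $q:=\lim_{k\to\infty}\sigma(k\tau,y_0)$; (4) the $\tau$-periodic points of $(X,\mathbb S_+,\pi)$ in the fibre $X_q=W\times\{q\}$ are isolated, i.e. for every $u$ with $\varphi(\tau,u,q)=u$ there is $\delta>0$ such that no $u'\neq u$ with $|u'-u|<\delta$ satisfies $\varphi(\tau,u',q)=u'$. Then $x_0$ is asymptotically $\tau$-periodic, i.e. there is a $\tau$-periodic point $p\in X$ with $\rho(\pi(t,x_0),\pi(t,p))\to0$ as $t\to+\infty$.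
   Context: $\mathbb S=\mathbb R$ or $\mathbb Z$, $\mathbb S_+=\{t\in\mathbb S:t\ge0\}$. $(Y,\mathbb S,\sigma)$ is a two-sided dynamical system on a complete metric space; $y_0$ is asymptotically $\tau$-periodic if there is $q$ with $\sigma(\tau,q)=q$ and $\rho(\sigma(t,y_0),\sigma(t,q))\to0$. $W\subseteq\mathbb R$ is an interval; a monotone cocycle is a continuous $\varphi:\mathbb S_+\times W\times Y\to W$ with $\varphi(0,u,y)=u$, $\varphi(t+s,u,y)=\varphi(t,\varphi(s,u,y),\sigma(s,y))$ and $u_1\le u_2\Rightarrow\varphi(t,u_1,y)\le\varphi(t,u_2,y)$. Skew-product: $X=W\times Y$, $\pi(t,(u,y))=(\varphi(t,u,y),\sigma(t,y))$; a point $p$ is $\tau$-periodic if $\pi(\tau,p)=p$. *)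

(* Defs.v *)
From Stdlib Require Import Reals.
Open Scope R_scope.

Definition is_metric {Y : Type} (d : Y -> Y -> R) : Prop :=
  (forall x y, 0 <= d x y) /\
  (forall x y, d x y = 0 <-> x = y) /\
  (forall x y, d x y = d y x) /\
  (forall x y z, d x z <= d x y + d y z).

Definition seq_cauchy {Y : Type} (d : Y -> Y -> R) (s : nat -> Y) : Prop :=
  forall eps, 0 < eps -> exists N, forall m n, (N <= m)%nat -> (N <= n)%nat ->
    d (s m) (s n) < eps.

Definition seq_lim {Y : Type} (d : Y -> Y -> R) (s : nat -> Y) (l : Y) : Prop :=
  forall eps, 0 < eps -> exists N, forall n, (N <= n)%nat -> d (s n) l < eps.

Definition complete_metric {Y : Type} (d : Y -> Y -> R) : Prop :=
  is_metric d /\ forall s, seq_cauchy d s -> exists l, seq_lim d s l.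

(* ---------- the time set S = R (disc = false) or S = Z (disc = true),
   realized as a subset of R ---------- *)
Definition inS (disc : bool) (t : R) : Prop :=
  if disc then exists z : Z, t = IZR z else True.

Definition inSp (disc : bool) (t : R) : Prop := inS disc t /\ 0 <= t.

Definition tends0_S (disc : bool) (f : R -> R) : Prop :=
  forall eps, 0 < eps -> exists T, forall t, inS disc t -> T <= t -> Rabs (f t) < eps.

Definition dyn_system (disc : bool) {Y : Type} (rho : Y -> Y -> R)
  (sigma : R -> Y -> Y) : Prop :=
  (forall y, sigma 0 y = y) /\
  (forall t s y, inS disc t -> inS disc s -> sigma (t + s) y = sigma t (sigma s y)) /\
  (forall t y eps, inS disc t -> 0 < eps -> exists delta, 0 < delta /\
     forall t' y', inS disc t' -> Rabs (t' - t) < delta -> rho y y' < delta ->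
       rho (sigma t y) (sigma t' y') < eps).

Definition asympt_periodic_Y (disc : bool) {Y : Type} (rho : Y -> Y -> R)
  (sigma : R -> Y -> Y) (tau : R) (y0 : Y) : Prop :=
  exists q, sigma tau q = q /\ tends0_S disc (fun t => rho (sigma t y0) (sigma t q)).

Definition is_interval (W : R -> Prop) : Prop :=
  forall a b c, W a -> W c -> a <= b -> b <= c -> W b.

Definition monotone_cocycle (disc : bool) {Y : Type} (rho : Y -> Y -> R)
  (sigma : R -> Y -> Y) (W : R -> Prop) (phi : R -> R -> Y -> R) : Prop :=
  (forall t u y, inSp disc t -> W u -> W (phi t u y)) /\
  (forall t u y eps, inSp disc t -> W u -> 0 < eps -> exists delta, 0 < delta /\
     forall t' u' y', inSp disc t' -> W u' -> Rabs (t' - t) < delta ->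
       Rabs (u' - u) < delta -> rho y y' < delta ->
       Rabs (phi t u y - phi t' u' y') < eps) /\
  (forall u y, W u -> phi 0 u y = u) /\
  (forall t s u y, inSp disc t -> inSp disc s -> W u ->
     phi (t + s) u y = phi t (phi s u y) (sigma s y)) /\
  (forall t u1 u2 y, inSp disc t -> W u1 -> W u2 -> u1 <= u2 ->
     phi t u1 y <= phi t u2 y).

Definition skew {Y : Type} (sigma : R -> Y -> Y) (phi : R -> R -> Y -> R)
  (t : R) (x : R * Y) : R * Y :=
  (phi t (fst x) (snd x), sigma t (snd x)).

Definition rhoX {Y : Type} (rho : Y -> Y -> R) (x x' : R * Y) : R :=
  Rabs (fst x - fst x') + rho (snd x) (snd x').

Definition inX (W : R -> Prop) {Y : Type} (x : R * Y) : Prop := W (fst x).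

Definition precompact_X (W : R -> Prop) {Y : Type} (rho : Y -> Y -> R)
  (A : R * Y -> Prop) : Prop :=
  forall s : nat -> R * Y, (forall n, A (s n)) ->
    exists (g : nat -> nat) (p : R * Y),
      (forall n, (g n < g (S n))%nat) /\ inX W p /\
      seq_lim (rhoX rho) (fun n => s (g n)) p.

Definition semi_traj (disc : bool) {Y : Type} (sigma : R -> Y -> Y)
  (phi : R -> R -> Y -> R) (x0 : R * Y) : R * Y -> Prop :=
  fun x => exists t, inSp disc t /\ x = skew sigma phi t x0.

(* Main.v *)
Require Import Defs.
From Stdlib Require Import Reals ZArith Lia Lra Classical ClassicalEpsilon.
Open Scope R_scope.

Ltac rab := unfold Rabs in *; repeat match goal with
  | |- context[Rcase_abs ?x] => destruct (Rcase_abs x)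
  | H: context[Rcase_abs ?x] |- _ => destruct (Rcase_abs x) end; lra.

Lemma gincr (g : nat -> nat) : (forall n, (g n < g (S n))%nat) -> forall n, (n <= g n)%nat.
Proof. intros H n; induction n. lia. specialize (H n); lia. Qed.

Lemma BW01 (f : nat -> R) a b : (forall n, a <= f n <= b) ->
  exists l, a <= l <= b /\ forall eps, 0 < eps -> forall N, exists p, (N <= p)%nat /\ Rabs (f p - l) < eps.
Proof.
  intros Hf. destruct (Bolzano_Weierstrass f (fun c => a <= c <= b) (compact_P3 a b) Hf) as [l Hl].
  assert (Hc : forall eps, 0 < eps -> forall N, exists p, (N <= p)%nat /\ Rabs (f p - l) < eps).
  { intros eps He N. destruct (Hl (fun x => Rabs (x - l) < eps) N) as [p [Hp1 Hp2]].
    - exists (mkposreal eps He). intros x Hx. exact Hx.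
    - exists p; auto. }
  exists l; split; [|exact Hc]. split.
  - destruct (Rle_lt_dec a l) as [h|h]; [exact h|].
    destruct (Hc (a - l) ltac:(lra) 0%nat) as [p [_ Hp]]. specialize (Hf p). rab.
  - destruct (Rle_lt_dec l b) as [h|h]; [exact h|].
    destruct (Hc (l - b) ltac:(lra) 0%nat) as [p [_ Hp]]. specialize (Hf p). rab.
Qed.

Lemma IZR_close (a b : Z) : Rabs (IZR a - IZR b) < 1 -> a = b.
Proof.
  rewrite <- minus_IZR. intros H. apply Rabs_def2 in H. destruct H as [H1 H2].
  apply lt_IZR in H1. rewrite <- opp_IZR in H2. apply lt_IZR in H2. lia.
Qed.

Lemma inSp_k (disc : bool) tau k : inSp disc tau -> inSp disc (INR k * tau).
Proof.
  intros [Hs Hp]. split.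
  - unfold inS in *. destruct disc; [|exact I]. destruct Hs as [z Hz].
    exists (Z.of_nat k * z)%Z. rewrite mult_IZR, <- INR_IZR_INZ, Hz. reflexivity.
  - apply Rmult_le_pos; [apply pos_INR | exact Hp].
Qed.

Lemma zero_of_small x : (forall eps, 0 < eps -> Rabs x < eps) -> x = 0.
Proof.
  intros H. destruct (Req_dec x 0) as [h|h]; [exact h|].
  specialize (H (Rabs x) (Rabs_pos_lt x h)). lra.
Qed.

Lemma decomp (disc : bool) tau t : 0 < tau -> inSp disc tau -> inS disc t -> 0 <= t ->
  exists k s, t = s + INR k * tau /\ inSp disc s /\ s <= tau /\ t - tau < INR k * tau.
Proof.
  intros Ht0 [Hts _] Hs Hp.
  destruct (archimed (t / tau)) as [A1 A2].
  set (z := (up (t / tau) - 1)%Z).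
  assert (Hdiv : 0 <= t / tau) by (apply Rmult_le_pos; [lra | left; apply Rinv_0_lt_compat; lra]).
  assert (Hz0 : (0 <= z)%Z).
  { assert (0 < IZR (up (t / tau))) by lra. apply lt_IZR in H. unfold z; lia. }
  assert (Hzr : IZR z = IZR (up (t / tau)) - 1) by (unfold z; rewrite minus_IZR; reflexivity).
  exists (Z.to_nat z), (t - IZR z * tau).
  assert (HI : INR (Z.to_nat z) = IZR z) by (rewrite INR_IZR_INZ, Z2Nat.id; auto).
  rewrite HI.
  assert (E1 : IZR z * tau <= t).
  { assert (IZR z <= t / tau) by lra.
    apply (Rmult_le_compat_r tau) in H; [|lra]. unfold Rdiv in H.
    rewrite Rmult_assoc, Rinv_l, Rmult_1_r in H; lra. }
  assert (E2 : t < IZR z * tau + tau).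
  { assert (t / tau < IZR z + 1) by lra.
    apply (Rmult_lt_compat_r tau) in H; [|lra]. unfold Rdiv in H.
    rewrite Rmult_assoc, Rinv_l, Rmult_1_r in H; lra. }
  split; [ring|]. split; [|lra]. split; [|lra].
  unfold inS in *. destruct disc; [|exact I].
  destruct Hs as [m Hm]. destruct Hts as [n Hn]. exists (m - z * n)%Z.
  rewrite minus_IZR, mult_IZR, Hm, Hn. reflexivity.
Qed.

Lemma arch_tau tau : 0 < tau -> forall T, exists K, forall k, (K <= k)%nat -> T <= INR k * tau.
Proof.
  intros Ht T. destruct (archimed (Rabs T / tau)) as [A1 _].
  assert (H0 : 0 <= Rabs T / tau) by (apply Rmult_le_pos; [apply Rabs_pos | left; apply Rinv_0_lt_compat; lra]).
  assert (Hu : (0 <= up (Rabs T / tau))%Z) by (apply le_IZR; lra).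
  exists (Z.to_nat (up (Rabs T / tau))). intros k Hk.
  apply le_INR in Hk. rewrite INR_IZR_INZ, Z2Nat.id in Hk by exact Hu.
  assert (Rabs T < INR k * tau).
  { assert (Rabs T / tau < INR k) by lra. apply (Rmult_lt_compat_r tau) in H; [|lra].
    unfold Rdiv in H. rewrite Rmult_assoc, Rinv_l, Rmult_1_r in H; lra. }
  pose proof (Rle_abs T). lra.
Qed.


Theorem mainTheorem10 (disc : bool) (Y : Type) (rho : Y -> Y -> R)
  (sigma : R -> Y -> Y) (W : R -> Prop) (phi : R -> R -> Y -> R)
  (tau : R) (x0 : R * Y) (q : Y) :
  complete_metric rho ->
  dyn_system disc rho sigma ->
  is_interval W ->
  monotone_cocycle disc rho sigma W phi ->
  inSp disc tau -> 0 < tau ->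
  (* (1) strict monotonicity at times k tau *)
  (forall (k : nat) u1 u2 y, W u1 -> W u2 -> u1 < u2 ->
     phi (INR k * tau) u1 y < phi (INR k * tau) u2 y) ->
  (* (2) precompact semi-trajectory *)
  inX W x0 ->
  precompact_X W rho (semi_traj disc sigma phi x0) ->
  (* (3) y0 := h x0 asymptotically tau-periodic, q = lim sigma(k tau, y0) *)
  asympt_periodic_Y disc rho sigma tau (snd x0) ->
  seq_lim rho (fun k => sigma (INR k * tau) (snd x0)) q ->
  (* (4) tau-periodic points in the fibre over q are isolated *)
  (forall u, W u -> phi tau u q = u ->
     exists delta, 0 < delta /\
       forall u', W u' -> u' <> u -> Rabs (u' - u) < delta -> phi tau u' q <> u') ->
  (* conclusion: x0 asymptotically tau-periodic *)
  exists p : R * Y, inX W p /\ skew sigma phi tau p = p /\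
    tends0_S disc (fun t => rhoX rho (skew sigma phi t x0) (skew sigma phi t p)).
Proof.
intros Hcm Hdyn Hint Hcoc Htau Htau0 Hstrict HW0 Hpre Hasy Hlimq Hiso.
destruct Hcm as [[Hrpos [Hrz [Hrsym Hrtri]]] _].
destruct Hdyn as [Hs0 [Hscomp Hscont]].
destruct Hcoc as [HWp [Hcont [Hphi0 [Hcc Hmono]]]].
set (u := fun k:nat => phi (INR k * tau) (fst x0) (snd x0)).
set (y := fun k:nat => sigma (INR k * tau) (snd x0)).
assert (HkS : forall k, inSp disc (INR k * tau)) by (intro; apply inSp_k; auto).
assert (HWu : forall k, W (u k)) by (intro; apply HWp; auto).
assert (Hstep : forall k, u (S k) = phi tau (u k) (y k)).
{ intro k; unfold u, y. rewrite S_INR. replace ((INR k + 1) * tau) with (tau + INR k * tau) by ring.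
  apply Hcc; auto. }
assert (Hyq : forall eps, 0<eps -> exists N, forall n, (N<=n)%nat -> rho q (y n) < eps).
{ intros e He; destruct (Hlimq e He) as [N HN]; exists N; intros n Hn; rewrite Hrsym; apply HN; auto. }
assert (HPk : forall w, W w -> forall eps, 0 < eps -> exists K, forall k, (K<=k)%nat ->
   Rabs (phi tau w q - phi tau w (y k)) < eps).
{ intros w Hw e He. destruct (Hcont tau w q e Htau Hw He) as [d [Hd Hd']].
  destruct (Hyq d Hd) as [N HN]. exists N; intros k Hk. apply Hd'; auto;
  rewrite Rminus_diag, Rabs_R0; auto. }
assert (Hfix : forall a b, W a -> W b ->
  (forall eps, 0<eps -> forall N, exists k, (N<=k)%nat /\ Rabs (u k - a) < eps) ->
  (forall eps, 0<eps -> forall N, exists k, (N<=k)%nat /\ Rabs (u k - b) < eps) ->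
  a < b -> forall w, a < w < b -> phi tau w q = w).
{ intros a b Wa Wb Ca Cb Hab w [Hw1 Hw2].
  assert (Ww : W w) by (apply (Hint a w b); auto; lra).
  destruct (Rtotal_order (phi tau w q) w) as [Hlt|[Heq|Hgt]]; [exfalso| exact Heq | exfalso].
  - destruct (HPk w Ww (w - phi tau w q) ltac:(lra)) as [K HK].
    destruct (Ca (w - a) ltac:(lra) K) as [k0 [Hk0 Hua]].
    assert (Hall : forall m, u (k0 + m)%nat < w).
    { induction m.
      - rewrite Nat.add_0_r. apply Rabs_def2 in Hua. lra.
      - rewrite Nat.add_succ_r, Hstep. specialize (HK (k0+m)%nat ltac:(lia)).
        assert (phi tau (u (k0+m)%nat) (y (k0+m)%nat) <= phi tau w (y (k0+m)%nat))
          by (apply Hmono; auto; lra).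
        apply Rabs_def2 in HK. lra. }
    destruct (Cb (b - w) ltac:(lra) k0) as [m0 [Hm0 Hub]].
    specialize (Hall (m0 - k0)%nat). replace (k0 + (m0 - k0))%nat with m0 in Hall by lia.
    apply Rabs_def2 in Hub. lra.
  - destruct (HPk w Ww (phi tau w q - w) ltac:(lra)) as [K HK].
    destruct (Cb (b - w) ltac:(lra) K) as [k0 [Hk0 Hua]].
    assert (Hall : forall m, w < u (k0 + m)%nat).
    { induction m.
      - rewrite Nat.add_0_r. apply Rabs_def2 in Hua. lra.
      - rewrite Nat.add_succ_r, Hstep. specialize (HK (k0+m)%nat ltac:(lia)).
        assert (phi tau w (y (k0+m)%nat) <= phi tau (u (k0+m)%nat) (y (k0+m)%nat))
          by (apply Hmono; auto; lra).
        apply Rabs_def2 in HK. lra. }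
    destruct (Ca (w - a) ltac:(lra) k0) as [m0 [Hm0 Hub]].
    specialize (Hall (m0 - k0)%nat). replace (k0 + (m0 - k0))%nat with m0 in Hall by lia.
    apply Rabs_def2 in Hub. lra. }
assert (Hnolt : forall a b, W a -> W b ->
  (forall eps, 0<eps -> forall N, exists k, (N<=k)%nat /\ Rabs (u k - a) < eps) ->
  (forall eps, 0<eps -> forall N, exists k, (N<=k)%nat /\ Rabs (u k - b) < eps) ->
  ~ a < b).
{ intros a b Wa Wb Ca Cb Hab.
  set (v := (a+b)/2).
  assert (Wv : W v) by (apply (Hint a v b); auto; unfold v; lra).
  assert (Fv : phi tau v q = v) by (apply (Hfix a b); auto; unfold v; lra).
  destruct (Hiso v Wv Fv) as [d [Hd Hd']].
  set (r := Rmin d ((b-a)/2)).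
  assert (Hr : 0 < r) by (apply Rmin_pos; lra).
  assert (Hr1 : r <= d) by apply Rmin_l.
  assert (Hr2 : r <= (b-a)/2) by apply Rmin_r.
  assert (Wu' : W (v + r/2)) by (apply (Hint a (v + r/2) b); auto; unfold v in *; lra).
  apply (Hd' (v + r/2) Wu').
  - lra.
  - replace (v + r/2 - v) with (r/2) by ring. rewrite Rabs_pos_eq; lra.
  - apply (Hfix a b); auto; unfold v in *; lra. }
assert (Huniq : forall a b, W a -> W b ->
  (forall eps, 0<eps -> forall N, exists k, (N<=k)%nat /\ Rabs (u k - a) < eps) ->
  (forall eps, 0<eps -> forall N, exists k, (N<=k)%nat /\ Rabs (u k - b) < eps) ->
  a = b).
{ intros a b Wa Wb Ca Cb. destruct (Rtotal_order a b) as [h|[h|h]]; auto; exfalso.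
  - exact (Hnolt a b Wa Wb Ca Cb h).
  - exact (Hnolt b a Wb Wa Cb Ca h). }
assert (Hext : forall h : nat -> nat, (forall n, (n <= h n)%nat) -> exists a, W a /\
   (forall eps, 0<eps -> forall N, exists n, (N<=n)%nat /\ Rabs (u (h n) - a) < eps)).
{ intros h Hh.
  destruct (Hpre (fun n => skew sigma phi (INR (h n) * tau) x0)) as [g [p [Hg [Wp Hl]]]].
  - intro n. exists (INR (h n) * tau); split; auto.
  - exists (fst p); split; auto. intros e He N. destruct (Hl e He) as [N1 HN1].
    exists (g (Nat.max N N1)). split.
    + pose proof (gincr g Hg (Nat.max N N1)); lia.
    + specialize (HN1 (Nat.max N N1) ltac:(lia)).
      unfold rhoX, skew in HN1; simpl in HN1.
      pose proof (Hrpos (sigma (INR (h (g (Nat.max N N1))) * tau) (snd x0)) (snd p)).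
      unfold u. lra. }
destruct (Hext (fun n => n) (fun n => le_n n)) as [us [Wus Cus]].
assert (Conv : forall eps, 0<eps -> exists N, forall n, (N<=n)%nat -> Rabs (u n - us) < eps).
{ apply NNPP; intro Hn.
  assert (Hex : exists e, 0 < e /\ forall N, exists n, (N<=n)%nat /\ e <= Rabs (u n - us)).
  { apply NNPP; intro Hn2; apply Hn; intros e He. apply NNPP; intro Hn3. apply Hn2.
    exists e; split; auto. intro N. apply NNPP; intro Hn4. apply Hn3. exists N.
    intros n Hn5. apply Rnot_le_lt. intro. apply Hn4. exists n; auto. }
  destruct Hex as [e [He Hb]].
  set (h := fun N => proj1_sig (constructive_indefinite_description _ (Hb N))).
  assert (Hh : forall N, (N <= h N)%nat /\ e <= Rabs (u (h N) - us)).
  { intro N; unfold h; destruct (constructive_indefinite_description _ _); simpl; auto. }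
  destruct (Hext h (fun N => proj1 (Hh N))) as [a [Wa Ca]].
  assert (Ha : a = us).
  { apply Huniq; [exact Wa | exact Wus | |].
    - intros e' He' N. destruct (Ca e' He' N) as [n [Hn1 Hn2]]. exists (h n); split; auto.
      pose proof (proj1 (Hh n)); lia.
    - intros e' He' N. destruct (Cus e' He' N) as [n [Hn1 Hn2]]. exists n; split; auto. }
  subst a. destruct (Ca e He 0%nat) as [n [_ Hn']]. specialize (Hh n). lra. }
assert (Hfus : phi tau us q = us).
{ apply Rminus_diag_uniq. apply zero_of_small. intros e He.
  destruct (Hcont tau us q (e/2) Htau Wus ltac:(lra)) as [d [Hd Hd']].
  destruct (Conv d Hd) as [N1 HN1]. destruct (Hyq d Hd) as [N2 HN2].
  destruct (Conv (e/2) ltac:(lra)) as [N3 HN3].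
  set (n := Nat.max N1 (Nat.max N2 N3)).
  specialize (Hd' tau (u n) (y n) Htau (HWu n)). rewrite Rminus_diag, Rabs_R0 in Hd'.
  specialize (Hd' Hd (HN1 n ltac:(unfold n; lia)) (HN2 n ltac:(unfold n; lia))).
  rewrite <- Hstep in Hd'. specialize (HN3 (S n) ltac:(unfold n; lia)).
  apply Rabs_def2 in Hd'. apply Rabs_def2 in HN3. apply Rabs_def1; lra. }
destruct Hasy as [q' [Hq'1 Hq'2]].
assert (Hsk : forall k, sigma (INR k * tau) q' = q').
{ induction k.
  - simpl; rewrite Rmult_0_l; apply Hs0.
  - rewrite S_INR; replace ((INR k+1)*tau) with (tau + INR k * tau) by ring.
    rewrite Hscomp; [rewrite IHk; auto | exact (proj1 Htau) | exact (proj1 (HkS k))]. }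
assert (Hqq : q' = q).
{ apply Hrz. apply Rle_antisym; [|apply Hrpos]. apply Rnot_lt_le; intro Hpos.
  set (e := rho q' q).
  destruct (Hq'2 (e/2) ltac:(unfold e; lra)) as [T HT].
  destruct (arch_tau tau Htau0 T) as [K1 HK1].
  destruct (Hlimq (e/2) ltac:(unfold e; lra)) as [K2 HK2].
  set (k := Nat.max K1 K2).
  specialize (HT (INR k * tau) (proj1 (HkS k)) (HK1 k ltac:(unfold k; lia))).
  cbv beta in HT. rewrite Hsk in HT. rewrite Rabs_pos_eq in HT by apply Hrpos.
  specialize (HK2 k ltac:(unfold k; lia)). unfold y in HK2; cbv beta in HK2.
  pose proof (Hrtri q' (sigma (INR k*tau) (snd x0)) q) as Ht.
  rewrite (Hrsym q' (sigma (INR k*tau) (snd x0))) in Ht. unfold e in *. lra. }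
subst q'.
assert (HB : forall e, 0<e -> exists K, forall k s, (K<=k)%nat -> inSp disc s -> s <= tau ->
   Rabs (phi s (u k) (y k) - phi s us q) < e).
{ intros e He. apply NNPP; intro Hn.
  assert (Hb : forall K, exists ks : nat * R, (K <= fst ks)%nat /\ inSp disc (snd ks) /\ snd ks <= tau /\
     e <= Rabs (phi (snd ks) (u (fst ks)) (y (fst ks)) - phi (snd ks) us q)).
  { intro K. apply NNPP; intro Hn2. apply Hn. exists K. intros k s Hk Hs Hst.
    apply Rnot_le_lt. intro Hle. apply Hn2. exists (k,s). simpl; auto. }
  set (F := fun K => proj1_sig (constructive_indefinite_description _ (Hb K))).
  assert (HF : forall K, (K <= fst (F K))%nat /\ inSp disc (snd (F K)) /\ snd (F K) <= tau /\
     e <= Rabs (phi (snd (F K)) (u (fst (F K))) (y (fst (F K))) - phi (snd (F K)) us q)).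
  { intro K; unfold F; destruct (constructive_indefinite_description _ _); simpl; auto. }
  destruct (BW01 (fun K => snd (F K)) 0 tau) as [l [Hl0 Hl]].
  { intro K. destruct (HF K) as [_ [[_ h1] [h2 _]]]. split; auto. }
  assert (HlS : inS disc l).
  { destruct disc eqn:Ed; [|exact I]. unfold inS.
    destruct (Hl (1/4) ltac:(lra) 0%nat) as [p0 [_ Hp0]]. cbv beta in Hp0.
    destruct (HF p0) as [_ [[Hs0' _] _]]. unfold inS in Hs0'. destruct Hs0' as [z0 Hz0].
    exists z0. destruct (Req_dec l (IZR z0)) as [h|h]; [exact h|exfalso].
    assert (Hr : 0 < Rmin (1/4) (Rabs (l - IZR z0)))
      by (apply Rmin_pos; [lra | apply Rabs_pos_lt; lra]).
    pose proof (Rmin_l (1/4) (Rabs (l - IZR z0))). pose proof (Rmin_r (1/4) (Rabs (l - IZR z0))).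
    destruct (Hl _ Hr 0%nat) as [p1 [_ Hp1]]. cbv beta in Hp1.
    destruct (HF p1) as [_ [[Hs1' _] _]]. unfold inS in Hs1'. destruct Hs1' as [z1 Hz1].
    rewrite Hz0 in Hp0. rewrite Hz1 in Hp1.
    assert (z1 = z0).
    { apply IZR_close. apply Rabs_def2 in Hp0. apply Rabs_def2 in Hp1. apply Rabs_def1; lra. }
    subst z1. rewrite Rabs_minus_sym in Hp1. lra. }
  destruct (Hcont l us q (e/2) (conj HlS (proj1 Hl0)) Wus ltac:(lra)) as [d [Hd Hd']].
  destruct (Conv d Hd) as [N1 HN1]. destruct (Hyq d Hd) as [N2 HN2].
  destruct (Hl d Hd (Nat.max N1 N2)) as [p [Hp Hpl]]. cbv beta in Hpl.
  destruct (HF p) as [Hk [Hs [Hst Hbad]]].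
  set (k := fst (F p)) in *. set (s := snd (F p)) in *.
  pose proof (Hd' s (u k) (y k) Hs (HWu k) Hpl (HN1 k ltac:(lia)) (HN2 k ltac:(lia))) as A1.
  assert (Hqq0 : rho q q < d) by (rewrite (proj2 (Hrz q q) eq_refl); exact Hd).
  assert (H00 : Rabs (us - us) < d) by (rewrite Rminus_diag, Rabs_R0; exact Hd).
  pose proof (Hd' s us q Hs Wus Hpl H00 Hqq0) as A2.
  apply Rabs_def2 in A1. apply Rabs_def2 in A2.
  revert Hbad. unfold Rabs; destruct Rcase_abs; lra. }
assert (Hpk : forall k, phi (INR k * tau) us q = us).
{ induction k.
  - simpl; rewrite Rmult_0_l; apply Hphi0; auto.
  - rewrite S_INR; replace ((INR k+1)*tau) with (tau + INR k * tau) by ring.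
    rewrite Hcc; auto. rewrite IHk, Hsk; exact Hfus. }
exists (us, q). split; [exact Wus|]. split.
{ unfold skew; simpl. rewrite Hfus, Hq'1. reflexivity. }
unfold tends0_S in *. intros e He.
destruct (HB (e/2) ltac:(lra)) as [K HK]. destruct (Hq'2 (e/2) ltac:(lra)) as [T1 HT1].
exists (Rmax T1 ((INR K + 1) * tau)). intros t Ht HT.
pose proof (Rmax_l T1 ((INR K + 1) * tau)). pose proof (Rmax_r T1 ((INR K + 1) * tau)).
assert (Ht0 : 0 <= t).
{ pose proof (pos_INR K). assert (0 <= (INR K + 1) * tau) by (apply Rmult_le_pos; lra). lra. }
specialize (HT1 t Ht ltac:(lra)). cbv beta in HT1. rewrite Rabs_pos_eq in HT1 by apply Hrpos.
destruct (decomp disc tau t Htau0 Htau Ht Ht0) as [k [s [Hts [Hs [Hst Hkt]]]]].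
assert (HKk : (K <= k)%nat).
{ assert (INR K * tau < INR k * tau) by lra.
  apply Rmult_lt_reg_r in H1; [|lra]. apply INR_lt in H1. lia. }
specialize (HK k s HKk Hs Hst).
unfold rhoX, skew; simpl. rewrite Rabs_pos_eq.
2: { pose proof (Rabs_pos (phi t (fst x0) (snd x0) - phi t us q)).
     pose proof (Hrpos (sigma t (snd x0)) (sigma t q)). lra. }
assert (E : phi t (fst x0) (snd x0) - phi t us q = phi s (u k) (y k) - phi s us q).
{ rewrite Hts. rewrite (Hcc s (INR k * tau) (fst x0) (snd x0) Hs (HkS k) HW0).
  rewrite (Hcc s (INR k * tau) us q Hs (HkS k) Wus). rewrite Hpk, Hsk. reflexivity. }
rewrite E. lra.
Qed.
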